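(* Let $m\ge 2$ and $n\ge 1$. In any $m\times n$ maximal configuration resistant to predators, the number of occupied lots in row $m-1$ (the penultimate row) is at most $2\lceil n/3\rceil$.
   Context: An $m\times n$ configuration is a $0$-$1$ matrix $C=(C_{i,j})$, $1\le i\le m$, $1\le j\le n$; $C_{i,j}=1$ means lot $(i,j)$ is occupied by a house. Row $1$ is the northernmost and row $m$ the southernmost; column $1$ is westernmost and column $n$ easternmost. A house at $(i,j)$ is blocked from sunlight if the three lots $(i,j-1)$, $(i,j+1)$, $(i+1,j)$ all lie inside the grid and are all occupied (lots outside the grid never obstruct sunlight). $C$ is permissible if no house is blocked, and maximal if it is permissible and setting any single empty lot to $1$ yields a non-permissible configuration. A maximal configuration is resistant to predators if, for every empty lot, putting a house on it (alone) results in that new house being blocked. *)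

(* Defs.v *)
From mathcomp Require Import all_boot.
Set Implicit Arguments. Unset Strict Implicit. Unset Printing Implicit Defensive.

(* An m x n configuration: a 0-1 matrix, represented as a boolean function on
   1-based coordinates (i,j); only the entries with 1 <= i <= m, 1 <= j <= n
   are meaningful (entries outside the grid are ignored by every definition). *)
Definition config := nat -> nat -> bool.

Definition in_grid (m n i j : nat) : bool := (1 <= i <= m) && (1 <= j <= n).

Definition occ (m n : nat) (C : config) (i j : nat) : bool :=
  in_grid m n i j && C i j.

Definition blocked (m n : nat) (C : config) (i j : nat) : bool :=
  [&& occ m n C i (j.-1) && (1 < j), occ m n C i j.+1 & occ m n C i.+1 j].

Definition permissible (m n : nat) (C : config) : Prop :=
  forall i j, occ m n C i j -> ~~ blocked m n C i j.

Definition add_house (C : config) (a b : nat) : config :=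
  fun i j => ((i == a) && (j == b)) || C i j.

Definition maximal (m n : nat) (C : config) : Prop :=
  permissible m n C /\
  forall a b, in_grid m n a b -> ~~ C a b -> ~ permissible m n (add_house C a b).

Definition resistant (m n : nat) (C : config) : Prop :=
  maximal m n C /\
  forall a b, in_grid m n a b -> ~~ C a b -> blocked m n (add_house C a b) a b.

Definition row_count (m n : nat) (C : config) (i : nat) : nat :=
  \sum_(1 <= j < n.+1) occ m n C i j.

(* Main.v *)
Require Import Defs.
From mathcomp Require Import all_boot.
From mathcomp Require Import zify.

Section S.
Variable g : nat -> nat.
Definition P k := \sum_(1 <= j < k.+1) g j.
Lemma PS k : P k.+1 = P k + g k.+1.
Proof. by rewrite /P big_nat_recr. Qed.
Lemma P0 : P 0 = 0.
Proof. by rewrite /P big_geq. Qed.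

Hypothesis g1 : forall j, g j <= 1.
Variable n : nat.
Hypothesis g3 : forall j, 1 <= j -> j + 2 <= n -> g j + g j.+1 + g j.+2 <= 2.

Lemma Pq q : 3 * q <= n -> P (3 * q) <= 2 * q.
Proof.
elim: q => [|q IH] H; first by rewrite P0.
have -> : 3 * q.+1 = (3 * q).+3 by lia.
rewrite !PS.
have := IH ltac:(lia). have := g3 ((3*q).+1) ltac:(lia) ltac:(lia). lia.
Qed.

Lemma Pbound : P n <= 2 * ((n + 2) %/ 3).
Proof.
have Hn := divn_eq n 3.
have Hr : n %% 3 < 3 by rewrite ltn_mod.
have := Pq (n %/ 3) ltac:(lia).
set q := n %/ 3. set r := n %% 3.
have -> : (n + 2) %/ 3 = q + (r != 0).
  by rewrite /q /r; case: (n %% 3) Hn Hr => [|[|[|]]] //= Hn Hr; lia.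
have En : n = 3 * q + r by lia.
rewrite En.
case: r En Hr => [|[|[|]]] // En Hr; rewrite ?addn0 ?addn1 ?addn2 ?PS;
  have := g1 (3 * q).+1; have := g1 (3 * q).+2; lia.
Qed.
End S.

Theorem mainTheorem7 (m n : nat) (C : config) :
  2 <= m -> 1 <= n -> resistant m n C ->
  row_count m n C m.-1 <= 2 * ((n + 2) %/ 3).
Proof.
move=> Hm Hn [[Hperm _] Hres].
have Hlast : forall b, 1 <= b <= n -> C m b.
  move=> b Hb; apply/negPn/negP => Hc.
  have := Hres m b ltac:(rewrite /in_grid; apply/andP; split=> //; apply/andP; split; lia) Hc.
  rewrite /blocked /occ /in_grid. case/and3P => _ _ /andP [/andP [/andP [_ ] ]].
  lia.
pose g := fun j => nat_of_bool (occ m n C m.-1 j).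
apply: (@Pbound g _ n).
- by move=> j; rewrite /g; case: occ.
- move=> j Hj Hjn.
  rewrite /g.
  case E1: (occ m n C m.-1 j); case E2: (occ m n C m.-1 j.+1);
    case E3: (occ m n C m.-1 j.+2) => //.
  exfalso.
  have Hb : blocked m n C m.-1 j.+1.
    rewrite /blocked /= E1 E3 /=.
    have -> : (m.-1).+1 = m by lia.
    rewrite /occ Hlast; last lia.
    rewrite /in_grid. apply/andP; split; first by lia.
    apply/andP; split; lia.
  by move: (Hperm m.-1 j.+1 E2); rewrite Hb.
Qed.
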